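(* Let $n,d\in\mathbb{N}$ with $d\ge 1$, and let $\mathbf{X}=\{\mathbf{x}_1,\dots,\mathbf{x}_m\}\subseteq\mathbb{B}^n$ be any dataset in which every example has at least $d+1$ nonzero entries, i.e. $\langle\mathbf{x}_i,\mathbf{x}_i\rangle\ge d+1$ for all $i$. Let $\tilde{\mathbf{K}}^{(d)}$ and $\tilde{\mathbf{K}}^{(d+1)}$ be the $m\times m$ matrices with entries $\tilde\kappa_\wedge^d(\mathbf{x}_i,\mathbf{x}_j)$ and $\tilde\kappa_\wedge^{d+1}(\mathbf{x}_i,\mathbf{x}_j)$. Then $\tilde\kappa_\wedge^d(\mathbf{x}_i,\mathbf{x}_j)^2\ge\tilde\kappa_\wedge^{d+1}(\mathbf{x}_i,\mathbf{x}_j)^2$ for all $i,j$, and consequently $\mathcal{C}(\tilde{\mathbf{K}}^{(d)})\le\mathcal{C}(\tilde{\mathbf{K}}^{(d+1)})$. In other words, $\tilde\kappa_\wedge^d$ is more general than $\tilde\kappa_\wedge^{d+1}$.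
   Context: $\mathbb{B}=\{0,1\}$. For $\mathbf{x},\mathbf{z}\in\mathbb{B}^n$, $\langle\mathbf{x},\mathbf{z}\rangle=\sum_i x_iz_i$. The Conjunctive kernel (C-Kernel) of arity $d$ is $\kappa_\wedge^d(\mathbf{x},\mathbf{z})=\binom{\langle\mathbf{x},\mathbf{z}\rangle}{d}$; equivalently it is the inner product of the feature maps $\phi_\wedge^d(\mathbf{x})=(\prod_{i=1}^n x_i^{b_i})_{\mathbf{b}\in\mathbb{B}_d}$, where $\mathbb{B}_d=\{\mathbf{b}\in\mathbb{B}^n:\|\mathbf{b}\|_1=d\}$ (each feature is the conjunction of the $d$ variables selected by $\mathbf{b}$). For a kernel $\kappa$, its normalized version is $\tilde\kappa(\mathbf{x},\mathbf{z})=\kappa(\mathbf{x},\mathbf{z})/\sqrt{\kappa(\mathbf{x},\mathbf{x})\kappa(\mathbf{z},\mathbf{z})}$ (defined when $\kappa(\mathbf{x},\mathbf{x}),\kappa(\mathbf{z},\mathbf{z})>0$). The spectral ratio of a positive semidefinite matrix $\mathbf{K}\in\mathbb{R}^{m\times m}$ is $\mathcal{C}(\mathbf{K})=\|\mathbf{K}\|_T/\|\mathbf{K}\|_F=\sum_i\mathbf{K}_{ii}/\sqrt{\sum_{i,j}\mathbf{K}_{ij}^2}$. A kernel $\kappa_1$ is said to be more general than $\kappa_2$ if $\mathcal{C}(\mathbf{K}^{(1)}_{\mathbf{X}})\le\mathcal{C}(\mathbf{K}^{(2)}_{\mathbf{X}})$ for the kernel matrices on the datasets under consideration. *)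

(* Defs.v *)
From HB Require Import structures.
From mathcomp Require Import all_boot all_order all_algebra.
Set Implicit Arguments. Unset Strict Implicit. Unset Printing Implicit Defensive.
Import Order.TTheory GRing.Theory Num.Theory.

Definition bvec (n : nat) := 'I_n -> bool.

Definition binner (n : nat) (x z : bvec n) : nat :=
  (\sum_(i < n) (x i && z i))%N.

Definition ckernel (d n : nat) (x z : bvec n) : nat := 'C(binner x z, d).

Local Open Scope ring_scope.

Definition nckernel (R : rcfType) (d n : nat) (x z : bvec n) : R :=
  (ckernel d x z)%:R / Num.sqrt ((ckernel d x x)%:R * (ckernel d z z)%:R).

Definition nkmatrix (R : rcfType) (d n m : nat) (X : 'I_m -> bvec n) : 'M[R]_m :=
  \matrix_(i < m, j < m) nckernel R d (X i) (X j).

(* Spectral ratio C(K) = ||K||_T / ||K||_F = trace K / sqrt(sum_{i,j} K_ij^2). *)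
Definition spectral_ratio (R : rcfType) (m : nat) (K : 'M[R]_m) : R :=
  \tr K / Num.sqrt (\sum_(i < m) \sum_(j < m) K i j ^+ 2).

(* Main.v *)
Require Import Defs.
From HB Require Import structures.
From mathcomp Require Import all_boot all_order all_algebra.
From mathcomp Require Import zify ring lra.
Import Order.TTheory GRing.Theory Num.Theory.
Local Open Scope ring_scope.

Lemma binner_le n (x z : bvec n) : (binner x z <= binner x x)%N.
Proof. rewrite /binner; apply: leq_sum => i _; by case: (x i); case: (z i). Qed.

Lemma binnerC n (x z : bvec n) : binner x z = binner z x.
Proof. rewrite /binner; apply: eq_bigr => i _; by rewrite andbC. Qed.

Lemma nat_key (a p q d : nat) : (a <= p)%N -> (a <= q)%N -> (d < p)%N -> (d < q)%N ->
  ('C(a, d.+1) ^ 2 * ('C(p, d) * 'C(q, d)) <= 'C(a, d) ^ 2 * ('C(p, d.+1) * 'C(q, d.+1)))%N.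
Proof.
move=> ap aq dp dq.
rewrite -(@leq_pmul2l (d.+1 ^ 2)) ?expn_gt0 //.
have E : forall k, (d.+1 * 'C(k, d.+1) = (k - d) * 'C(k, d))%N by move=> k; exact: mul_bin_left.
have -> : (d.+1 ^ 2 * ('C(a, d.+1) ^ 2 * ('C(p, d) * 'C(q, d))) = ((d.+1 * 'C(a, d.+1)) ^ 2 * ('C(p, d) * 'C(q, d))))%N.
  rewrite expnMn; nia.
have -> : (d.+1 ^ 2 * ('C(a, d) ^ 2 * ('C(p, d.+1) * 'C(q, d.+1))) = ('C(a, d) ^ 2 * ((d.+1 * 'C(p, d.+1)) * (d.+1 * 'C(q, d.+1)))))%N.
  nia.
rewrite !E expnMn.
have h : ((a - d) ^ 2 <= (p - d) * (q - d))%N.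
  by rewrite expnS expn1; apply: leq_mul; apply: leq_sub2r.
set A := 'C(a, d); set P := 'C(p, d); set Q := 'C(q, d).
have -> : ((a - d) ^ 2 * A ^ 2 * (P * Q) = ((a - d) ^ 2) * (A ^ 2 * (P * Q)))%N by nia.
have -> : (A ^ 2 * ((p - d) * P * ((q - d) * Q)) = ((p - d) * (q - d)) * (A ^ 2 * (P * Q)))%N.
  nia.
by apply: leq_mul.
Qed.

Lemma nck_sq (R : rcfType) d n (x z : bvec n) :
  nckernel R d x z ^+ 2 = (ckernel d x z)%:R ^+ 2 / ((ckernel d x x)%:R * (ckernel d z z)%:R).
Proof. by rewrite /nckernel expr_div_n sqr_sqrtr // mulr_ge0. Qed.

Lemma ck_pos {d n} {x : bvec n} : (d <= binner x x)%N -> (0 < ckernel d x x)%N.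
Proof. by move=> h; rewrite /ckernel bin_gt0. Qed.

Lemma nck_diag (R : rcfType) d n (x : bvec n) : (d <= binner x x)%N -> nckernel R d x x = 1.
Proof.
move=> h; rewrite /nckernel -expr2 sqrtr_sqr ger0_norm // divff //.
by rewrite pnatr_eq0 -lt0n ck_pos.
Qed.

Lemma pointwise (R : rcfType) d n (x z : bvec n) :
  (d.+1 <= binner x x)%N -> (d.+1 <= binner z z)%N ->
  nckernel R d.+1 x z ^+ 2 <= nckernel R d x z ^+ 2.
Proof.
move=> hx hz.
have px := ck_pos hx; have pz := ck_pos hz.
have px' := ck_pos (ltnW hx); have pz' := ck_pos (ltnW hz).
rewrite !nck_sq ler_pdivrMr ?mulr_gt0 ?ltr0n // mulrAC ler_pdivlMr ?mulr_gt0 ?ltr0n //.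
rewrite -!natrX -!natrM ler_nat.
apply: nat_key => //; first exact: binner_le.
by rewrite binnerC binner_le.
Qed.

Theorem mainTheorem1 (R : rcfType) (n d m : nat) (X : 'I_m -> bvec n) :
  (1 <= d)%N ->
  (forall i : 'I_m, (d.+1 <= binner (X i) (X i))%N) ->
  (forall i j : 'I_m,
      nckernel R d.+1 (X i) (X j) ^+ 2 <= nckernel R d (X i) (X j) ^+ 2) /\
  spectral_ratio (nkmatrix R d X) <= spectral_ratio (nkmatrix R d.+1 X).
Proof.
move=> _ hX.
have pw : forall i j : 'I_m,
      nckernel R d.+1 (X i) (X j) ^+ 2 <= nckernel R d (X i) (X j) ^+ 2.
  by move=> i j; apply: pointwise.
split => //.
case: m X hX pw => [|m] X hX pw.
  by rewrite /spectral_ratio /mxtrace !big_ord0 !mul0r.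
rewrite /spectral_ratio.
have trE e : (e <= d.+1)%N -> \tr (nkmatrix R e X) = m.+1%:R.
  move=> he; rewrite /mxtrace (eq_bigr (fun=> 1)); last first.
    by move=> i _; rewrite mxE nck_diag //; apply: leq_trans he (hX i).
  by rewrite sumr_const card_ord.
rewrite !trE // ?leqnSn //.
set Sd := \sum_(i < m.+1) \sum_(j < m.+1) _.
set S1 := \sum_(i < m.+1) \sum_(j < m.+1) _.
have le1 : S1 <= Sd.
  by apply: ler_sum => i _; apply: ler_sum => j _; rewrite !mxE.
have S1pos : 0 < S1.
  apply: (@lt_le_trans _ _ 1); first exact: ltr01.
  rewrite /S1 (bigD1 ord0) //= (bigD1 ord0) //= mxE nck_diag // expr1n.
  rewrite -addrA lerDl addr_ge0 // ?sumr_ge0 // => i _; rewrite ?sqr_ge0 ?sumr_ge0 // => j _;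
    exact: sqr_ge0.
have s1 : 0 < Num.sqrt S1 by rewrite sqrtr_gt0.
have sd : 0 < Num.sqrt Sd by rewrite sqrtr_gt0 (lt_le_trans S1pos).
rewrite ler_pdivlMr // mulrAC ler_pdivrMr //.
apply: ler_wpM2l; first by rewrite ler0n.
rewrite ler_sqrt //; exact: (le_trans (ltW S1pos) le1).
Qed.
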